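(* (Gillett's conjecture.) Let $m=3$ and $n\ge1$, and let $k=\lfloor n/2\rfloor$. For every probability vector $p=(p_1,\dots,p_6)$ on the six rankings, $$P(3,n;p)\;\ge\;3\Bigl(1-B\bigl(k;n,\tfrac13\bigr)\Bigr)=3n\binom{n-1}{k}\int_0^{1/3}t^k(1-t)^{n-k-1}\,dt,$$ with equality when $p_1=p_4=p_5=\frac13$, $p_2=p_3=p_6=0$ (and also when $p_2=p_3=p_6=\frac13$, $p_1=p_4=p_5=0$). Hence these distributions minimize the probability of a Condorcet winner.
   Context: Three candidates $C_1,C_2,C_3$ and six rankings with probabilities $p_1$ ($C_1C_2C_3$), $p_2$ ($C_1C_3C_2$), $p_3$ ($C_2C_1C_3$), $p_4$ ($C_2C_3C_1$), $p_5$ ($C_3C_1C_2$), $p_6$ ($C_3C_2C_1$), listed best to worst. $n$ voters independently choose rankings with these probabilities. A candidate is a Condorcet winner if, for every other candidate, strictly more than $n/2$ voters rank it above that candidate. $P(3,n;p)$ is the probability that a Condorcet winner exists. $B(k;n,q)=\sum_{j=0}^{k}\binom nj q^j(1-q)^{n-j}$ is the binomial cumulative distribution function. *)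

(* Defs.v *)
From HB Require Import structures.
From mathcomp Require Import all_boot all_order all_algebra.
From mathcomp Require Import all_classical all_reals all_analysis.
Set Implicit Arguments. Unset Strict Implicit. Unset Printing Implicit Defensive.
Import Order.TTheory GRing.Theory Num.Theory.
Local Open Scope ring_scope.

(* Candidates C_1,C_2,C_3 are 'I_3 (C_j = index j-1).
   Rankings are 'I_6, ranking r = index (k-1) corresponds to p_k:
   p_1: C1C2C3, p_2: C1C3C2, p_3: C2C1C3, p_4: C2C3C1, p_5: C3C1C2, p_6: C3C2C1
   (best to worst). *)
Definition ranking_list (r : 'I_6) : seq nat :=
  match val r with
  | 0 => [:: 0; 1; 2]
  | 1 => [:: 0; 2; 1]
  | 2 => [:: 1; 0; 2]
  | 3 => [:: 1; 2; 0]
  | 4 => [:: 2; 0; 1]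
  | _ => [:: 2; 1; 0]
  end%N.

Definition prefers (r : 'I_6) (a b : 'I_3) : bool :=
  (index (val a) (ranking_list r) < index (val b) (ranking_list r))%N.

Definition condorcet_winner (n : nat) (prof : {ffun 'I_n -> 'I_6}) (c : 'I_3) : bool :=
  [forall d : 'I_3, (d != c) ==>
     (n < 2 * #|[set i : 'I_n | prefers (prof i) c d]|)%N].

Definition has_condorcet_winner (n : nat) (prof : {ffun 'I_n -> 'I_6}) : bool :=
  [exists c : 'I_3, condorcet_winner prof c].

(* P(3,n;p): n voters choose rankings independently with probabilities p *)
Definition PCW (R : realType) (n : nat) (p : 'I_6 -> R) : R :=
  \sum_(prof : {ffun 'I_n -> 'I_6} | has_condorcet_winner prof)
     \prod_(i < n) p (prof i).

Definition is_prob_vector (R : realType) (p : 'I_6 -> R) : Prop :=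
  (forall r, 0 <= p r) /\ \sum_(r < 6) p r = 1.

Definition binomB (R : realType) (k n : nat) (q : R) : R :=
  \sum_(j < k.+1) ('C(n, j))%:R * q ^+ j * (1 - q) ^+ (n - j).

Definition p_cyc1 (R : realType) (r : 'I_6) : R :=
  if (val r \in [:: 0; 3; 4]%N) then 3^-1 else 0.
Definition p_cyc2 (R : realType) (r : 'I_6) : R :=
  if (val r \in [:: 1; 2; 5]%N) then 3^-1 else 0.

(* Main.v *)
Require Import Defs.
From HB Require Import structures.
From mathcomp Require Import all_boot all_order all_algebra.
From mathcomp Require Import all_classical all_reals all_analysis.
From mathcomp Require Import ring lra zify.
Set Implicit Arguments. Unset Strict Implicit. Unset Printing Implicit Defensive.
Import Order.TTheory GRing.Theory Num.Theory.
Import numFieldNormedType.Exports.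
Local Open Scope ring_scope.

Definition topb (r : 'I_6) (c : 'I_3) : bool := ((val r)./2 == val c)%N.

Ltac case6 r := case: r => [[|[|[|[|[|[|?]]]]]] ?] //.
Ltac case3 r := case: r => [[|[|[|?]]] ?] //.

Lemma top_prefers r c d : d != c -> topb r c -> prefers r c d.
Proof.
case6 r; case3 c; case3 d.
Qed.
Definition S1 : pred 'I_6 := fun r => (val r \in [:: 0; 3; 4])%N.
Definition S2 : pred 'I_6 := fun r => (val r \in [:: 1; 2; 5])%N.
Definition d1 (c : 'I_3) : 'I_3 := match val c with 0%N => @Ordinal 3 2 isT | 1%N => @Ordinal 3 0 isT | _ => @Ordinal 3 1 isT end.
Definition d2 (c : 'I_3) : 'I_3 := match val c with 0%N => @Ordinal 3 1 isT | 1%N => @Ordinal 3 2 isT | _ => @Ordinal 3 0 isT end.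

Lemma cyc1P c r : d1 c != c /\ (S1 r -> prefers r c (d1 c) -> topb r c).
Proof. case3 c; case6 r; vm_compute; split=> //. Qed.
Lemma cyc2P c r : d2 c != c /\ (S2 r -> prefers r c (d2 c) -> topb r c).
Proof. case3 c; case6 r; vm_compute; split=> //. Qed.

Section Comb.
Variables (R : realType) (n : nat).
Implicit Types (p : 'I_6 -> R) (prof : {ffun 'I_n -> 'I_6}).

Definition wt p prof : R := \prod_(i < n) p (prof i).
Definition tset prof c := [set i : 'I_n | topb (prof i) c].
Definition maj prof c : bool := (n < 2 * #|tset prof c|)%N.
Definition Qc p c : R := \sum_(prof : {ffun 'I_n -> 'I_6} | maj prof c) wt p prof.

Lemma maj_cw prof c : maj prof c -> condorcet_winner prof c.
Proof.
rewrite /maj => h; apply/forallP => d; apply/implyP => dc.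
apply: (leq_trans h); rewrite leq_mul2l /=; apply: subset_leq_card.
apply/fintype.subsetP => i; rewrite !inE => t; exact: top_prefers.
Qed.

Lemma topb_uniq r c1 c2 : topb r c1 -> topb r c2 -> c1 = c2.
Proof. by rewrite /topb => /eqP h1 /eqP h2; apply: val_inj; rewrite /= -h1 -h2. Qed.

Lemma maj_uniq prof c1 c2 : maj prof c1 -> maj prof c2 -> c1 = c2.
Proof.
rewrite /maj => h1 h2; apply/eqP; apply/negPn/negP => ne.
have dis : [disjoint tset prof c1 & tset prof c2].
  apply/pred0P => i /=; apply/negP => /andP []; rewrite !inE => a b.
  by move: ne; rewrite (topb_uniq a b) eqxx.
have [_] := leq_card_setU (tset prof c1) (tset prof c2); rewrite dis => /eqP e. have := max_card (tset prof c1 :|: tset prof c2).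
rewrite card_ord e. lia.
Qed.

Lemma sum_maj prof (x : R) :
  \sum_(c < 3) (if maj prof c then x else 0) = if [exists c, maj prof c] then x else 0.
Proof.
case: existsP => [[c0 h0]|h].
  rewrite (bigD1 c0) //= h0 big1 ?addr0 // => c /negPf nc.
  by case: ifP => // m; move: nc; rewrite (maj_uniq m h0) eqxx.
by rewrite big1 // => c _; case: ifP => // m; case: h; exists c.
Qed.

Lemma PCW_sumQ p : \sum_(c < 3) Qc p c =
   \sum_prof (if [exists c, maj prof c] then wt p prof else 0).
Proof.
rewrite /Qc; under eq_bigr do rewrite big_mkcond.
rewrite exchange_big /=; apply: eq_bigr => prof _; exact: sum_maj.
Qed.

Lemma PCW_ge p : (forall r, 0 <= p r) -> \sum_(c < 3) Qc p c <= PCW n p.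
Proof.
move=> p0; rewrite PCW_sumQ /PCW [X in _ <= X]big_mkcond /=.
apply: ler_sum => prof _.
case: existsP => [[c h]|_].
  suff -> : has_condorcet_winner prof by [].
  by apply/existsP; exists c; apply: maj_cw.
case: ifP => // _; apply: prodr_ge0 => i _; exact: p0.
Qed.

Lemma PCW_cyc p (S : pred 'I_6) (dd : 'I_3 -> 'I_3) :
  (forall c r, dd c != c /\ (S r -> prefers r c (dd c) -> topb r c)) ->
  (forall r, ~~ S r -> p r = 0) ->
  PCW n p = \sum_(c < 3) Qc p c.
Proof.
move=> Hc Hs; rewrite PCW_sumQ /PCW big_mkcond /=; apply: eq_bigr => prof _.
have [w0|wn0] := eqVneq (wt p prof) 0.
  by rewrite /wt in w0 *; rewrite w0; case: ifP => //; case: ifP.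
have supp i : S (prof i).
  apply/negPn/negP => ns; move: wn0; rewrite /wt (bigD1 i) //= Hs // mul0r eqxx //.
case: existsP => [[c h]|nh].
  suff -> : has_condorcet_winner prof by [].
  by apply/existsP; exists c; apply: maj_cw.
case: ifP => // /existsP [c /forallP /(_ (dd c))].
have [dc _] := Hc c (@ord0 5).
rewrite dc /= => h; case: nh; exists c; rewrite /maj.
apply: (leq_trans h); rewrite leq_mul2l /=; apply: subset_leq_card.
apply/fintype.subsetP => i; rewrite !inE => pr.
by have [_ H] := Hc c (prof i); apply: H.
Qed.
End Comb.


Section Q.
Variables (R : realType) (n : nat).

Definition tc (p : 'I_6 -> R) c : R := \sum_(r | topb r c) p r.
Definition fmaj (t : R) : R :=
  \sum_(j < n.+1 | (n < 2 * j)%N) ('C(n, j))%:R * t ^+ j * (1 - t) ^+ (n - j).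

Lemma prod_if (A : {set 'I_n}) (a b : R) :
  \prod_(i < n) (if i \in A then a else b) = a ^+ #|A| * b ^+ (n - #|A|).
Proof.
rewrite (bigID (mem A)) /=.
rewrite (eq_bigr (fun _ => a)); last by move=> i ->.
rewrite [X in _ * X](eq_bigr (fun _ => b)); last by move=> i /negPf ->.
rewrite !prodr_const; congr (_ * _ ^+ _).
have e := cardC A; rewrite card_ord in e; apply: (@addnI #|A|); rewrite subnKC; [exact: e| by move: e; lia].
Qed.

Lemma sum_card (G : nat -> R) :
  \sum_(A : {set 'I_n}) G #|A| = \sum_(j < n.+1) ('C(n, j))%:R * G j.
Proof.
rewrite (partition_big (fun A : {set 'I_n} => (inord #|A| : 'I_n.+1)) predT) //=.
apply: eq_bigr => j _.
have cA (A : {set 'I_n}) : (inord #|A| == j) = (#|A| == j).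
  have : (#|A| <= n)%N by have := max_card A; rewrite card_ord.
  by move=> le; rewrite -val_eqE /= inordK.
rewrite (eq_bigr (fun _ => G j)); last by move=> A /eqP <-; rewrite inordK //;
  have := max_card A; rewrite card_ord.
rewrite (eq_bigl (mem [set A : {set 'I_n} | #|A| == j])); last first.
  by move=> A; rewrite /= cA inE.
by rewrite sumr_const card_draws card_ord mulr_natl.
Qed.

Lemma Q_eq (p : 'I_6 -> R) c : \sum_r p r = 1 -> Qc n p c = fmaj (tc p c).
Proof.
move=> p1.
set t := tc p c.
have ht (A : {set 'I_n}) i : \sum_(r | topb r c == (i \in A)) p r = if i \in A then t else 1 - t.
  case: (i \in A).
    by apply: eq_bigl => r; rewrite eqb_id.
  rewrite -p1 [X in _ = X - _](bigID (fun r => topb r c)) /= /t /tc addrAC subrr add0r.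
  by apply: eq_bigl => r; rewrite eqbF_neg.
rewrite /Qc big_mkcond /=.
rewrite (partition_big (fun prof : {ffun 'I_n -> 'I_6} => tset prof c) predT) //=.
transitivity (\sum_(A : {set 'I_n}) (if (n < 2 * #|A|)%N then t ^+ #|A| * (1 - t) ^+ (n - #|A|) else 0)).
  apply: eq_bigr => A _.
  rewrite (eq_bigr (fun prof => if (n < 2 * #|A|)%N then wt p prof else 0)); last first.
    by move=> prof /eqP <-.
  case: ifP => _; last by rewrite big1.
  rewrite /wt -(prod_if A) -(eq_bigr _ (fun i _ => ht A i)).
  rewrite bigA_distr_big_dep; apply: eq_bigl => prof /=.
  apply/eqP/familyP => [<- i | H]; first by rewrite unfold_in /tset inE.
  by apply/finset.setP => i; have := H i; rewrite unfold_in /tset inE => /eqP.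
rewrite (sum_card (fun j => if (n < 2 * j)%N then t ^+ j * (1 - t) ^+ (n - j) else 0)).
rewrite /fmaj [RHS]big_mkcond /=; apply: eq_bigr => j _.
by case: ifP; rewrite ?mulr0 ?mulrA.
Qed.
End Q.


Section Poly.
Variable R : realType.

Definition T (a b : nat) : {poly R} := 'X^a * (1 - 'X) ^+ b.

Lemma derivT a b : (T a b)^`() = a%:R *: T a.-1 b - b%:R *: T a b.-1.
Proof.
rewrite /T derivM derivXn deriv_exp derivB derivX -polyC1 derivC !scaler_nat.
ring.
Qed.

Definition Bp (n K : nat) : {poly R} :=
  \sum_(j < K.+1) ('C(n, j))%:R *: T j (n - j).

Lemma derivBp n K : (K < n)%N ->
  (Bp n K)^`() = - (n * 'C(n.-1, K))%:R *: T K (n.-1 - K).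
Proof.
elim: K => [|K IH] hK.
  by rewrite /Bp big_ord_recr big_ord0 /= add0r derivZ derivT !bin0 muln1 !subn0 scale1r scale0r sub0r /T !expr0 !mul1r scaleNr.
rewrite /Bp big_ord_recr /= -/(Bp n K) derivD IH 1?ltnW // derivZ derivT.
have [e he] : exists e, n = (K + 2 + e)%N by exists (n - K - 2)%N; lia.
have h1 : (n * 'C(n.-1, K) = 'C(n, K.+1) * K.+1)%N by rewrite mul_bin_diag mulnC.
have h2 : (n * 'C(n.-1, K.+1) = 'C(n, K.+1) * e.+1)%N.
  by rewrite mul_bin_down mulnC he; congr (_ * _)%N; lia.
rewrite h1 h2.
have -> : (n.-1 - K = e.+1)%N by lia.
have -> : (n - K.+1 = e.+1)%N by lia.
have -> : (n.-1 - K.+1 = e)%N by lia.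
rewrite /T /= !natrM !exprS.
rewrite -!mul_polyC !polyCN !polyCM.
ring.
Qed.
End Poly.


Lemma powle (R : realType) (x y : R) e : 0 <= x -> x <= y -> x ^+ e <= y ^+ e.
Proof. by move=> x0 xy; apply: lerXn2r; rewrite ?nnegrE // (le_trans x0 xy). Qed.

Lemma mvt_poly (R : realType) (p : {poly R}) (a b : R) : a <= b ->
  exists2 x, x \in `[a, b]%R & p.[b] - p.[a] = p^`().[x] * (b - a).
Proof.
move=> ab.
have [|x xab h] := @MVT_segment R (horner p) (horner p^`()) a b ab.
  by apply: continuous_subspaceT; exact: continuous_horner.
by exists x.
Qed.

Section Anal.
Variables (R : realType) (n : nat).
Hypothesis hn : (1 <= n)%N.
Let k := n./2.
Let m := (n - k - 1)%N.

Definition cc : R := (n * 'C(n.-1, k))%:R.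
Definition Fp : {poly R} := 1 - Bp R n k.
Definition gg (t : R) : R := t ^+ k * (1 - t) ^+ m.

Lemma km : (m <= k)%N.
Proof. rewrite /m /k; have := odd_double_half n; case: (odd n) => /=; lia. Qed.

Lemma kn : (k < n)%N.
Proof. rewrite /k; have := odd_double_half n; case: (odd n) => /=; lia. Qed.

Lemma cc_gt0 : 0 < cc.
Proof. rewrite /cc ltr0n muln_gt0 hn /= bin_gt0; have := kn; lia. Qed.

Lemma Fp_horner t : Fp.[t] = 1 - binomB k n t.
Proof.
rewrite /Fp /Bp /binomB hornerD hornerN hornerC horner_sum; congr (_ - _).
apply: eq_bigr => j _; rewrite hornerZ /T hornerM hornerXn horner_exp hornerD hornerN hornerX hornerC.
by rewrite mulrA.
Qed.

Lemma Fp_deriv : Fp^`() = cc *: T R k m.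
Proof.
rewrite /Fp derivB -polyC1 derivC sub0r derivBp ?kn // scaleNr opprK.
by congr (_ *: T _ _ _); rewrite /m; lia.
Qed.

Lemma Fp_deriv_horner t : Fp^`().[t] = cc * gg t.
Proof. by rewrite Fp_deriv hornerZ /T hornerM hornerXn horner_exp hornerD hornerN hornerX hornerC. Qed.

Lemma gg_mono a b : 0 <= a -> a <= b -> b <= 2^-1 -> gg a <= gg b.
Proof.
move=> a0 ab b2.
have e t : gg t = t ^+ (k - m) * (t * (1 - t)) ^+ m.
  by rewrite /gg exprMn mulrA -exprD subnK // km.
rewrite !e; apply: ler_pM.
- by apply: exprn_ge0.
- by apply: exprn_ge0; apply: mulr_ge0 => //; lra.
- exact: powle.
- apply: powle; first by apply: mulr_ge0 => //; lra.
  nra.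
Qed.

Lemma gg_key s : 3^-1 <= s -> s <= 1 -> gg ((1 - s) / 2) <= gg s.
Proof.
move=> s3 s1.
have e t : gg t = t ^+ (k - m) * (t * (1 - t)) ^+ m.
  by rewrite /gg exprMn mulrA -exprD subnK // km.
rewrite !e; apply: ler_pM.
- by apply: exprn_ge0; lra.
- by apply: exprn_ge0; apply: mulr_ge0 => //; lra.
- apply: powle; lra.
- apply: powle; first by apply: mulr_ge0 => //; lra.
  nra.
Qed.
End Anal.


Section Ineq.
Variables (R : realType) (n : nat).
Hypothesis hn : (1 <= n)%N.
Local Notation Fp := (@Fp R n).
Local Notation gg := (@gg R n).
Local Notation cc := (@cc R n).

Lemma mvtF a b : a <= b -> exists2 x, a <= x <= b & Fp.[b] - Fp.[a] = cc * gg x * (b - a).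
Proof.
move=> ab; have [x xab h] := mvt_poly Fp ab.
by exists x; [move: xab; rewrite in_itv | rewrite h Fp_deriv_horner].
Qed.

Lemma jensen0 x y : 0 <= x -> x <= y -> y <= 2^-1 ->
  2 * Fp.[(x + y) / 2] <= Fp.[x] + Fp.[y].
Proof.
move=> x0 xy y2.
set z := (x + y) / 2.
have xz : x <= z by rewrite /z; lra.
have zy : z <= y by rewrite /z; lra.
have [u /andP[xu uz] hu] := mvtF xz.
have [v /andP[zv vy] hv] := mvtF zy.
have guv : gg u <= gg v.
  apply: gg_mono => //; [exact: le_trans xu|exact: le_trans uz zv|exact: le_trans vy y2].
have e : y - z = z - x by rewrite /z; lra.
have c0 := cc_gt0 R hn.
have : 0 <= cc * (gg v - gg u) * (y - z).
  by apply: mulr_ge0; [apply: mulr_ge0; [lra|lra]|lra].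
rewrite e in hv; nra.
Qed.

Lemma jensen x y : 0 <= x -> x <= 2^-1 -> 0 <= y -> y <= 2^-1 ->
  2 * Fp.[(x + y) / 2] <= Fp.[x] + Fp.[y].
Proof.
move=> x0 x2 y0 y2; case: (leP x y) => h.
  exact: jensen0.
by rewrite addrC [X in _ <= X]addrC; apply: jensen0 => //; apply: ltW.
Qed.

Definition qq : {poly R} := (2^-1)%:P - (2^-1)%:P * 'X.
Definition Hp : {poly R} := Fp + 2%:P * (Fp \Po qq).

Lemma qq_horner x : qq.[x] = (1 - x) / 2.
Proof. by rewrite /qq !hornerE; field. Qed.

Lemma Hp_horner x : Hp.[x] = Fp.[x] + 2 * Fp.[(1 - x) / 2].
Proof. by rewrite /Hp hornerD hornerM hornerC horner_comp qq_horner. Qed.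

Lemma qq_deriv : qq^`() = - (2^-1)%:P.
Proof. by rewrite /qq derivB derivC deriv_mulC derivX mulr1 sub0r. Qed.

Lemma aux2 (a b c : R) : a * b + 2 * (a * c * - 2^-1) = a * (b - c).
Proof. by field. Qed.

Lemma Hp_deriv x : Hp^`().[x] = cc * (gg x - gg ((1 - x) / 2)).
Proof.
rewrite /Hp derivD deriv_mulC deriv_comp qq_deriv.
rewrite hornerD hornerM hornerC hornerM horner_comp hornerN hornerC.
by rewrite qq_horner !Fp_deriv_horner //; apply: aux2.
Qed.

Lemma hmono s : 3^-1 <= s -> s <= 1 -> 3 * Fp.[3^-1] <= Fp.[s] + 2 * Fp.[(1 - s) / 2].
Proof.
move=> s3 s1.
have [x] := mvt_poly Hp s3; rewrite in_itv /= => /andP[x3 xs] h.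
have e : (1 - 3^-1) / 2 = 3^-1 :> R by field.
move: h; rewrite !Hp_horner Hp_deriv e => h.
have gk : gg ((1 - x) / 2) <= gg x by apply: gg_key => //; exact: le_trans xs s1.
have c0 := cc_gt0 R hn.
have : 0 <= cc * (gg x - gg ((1 - x) / 2)) * (s - 3^-1).
  by apply: mulr_ge0; [apply: mulr_ge0; lra|lra].
lra.
Qed.
End Ineq.

Section Ineq3.
Variables (R : realType) (n : nat).
Hypothesis hn : (1 <= n)%N.
Local Notation Fp := (@Fp R n).

Lemma ineq3_max a b c : 0 <= b -> 0 <= c -> a + b + c = 1 -> b <= a -> c <= a ->
  3 * Fp.[3^-1] <= Fp.[a] + Fp.[b] + Fp.[c].
Proof.
move=> b0 c0 s ba ca.
have e : (b + c) / 2 = (1 - a) / 2 by lra.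
have : 3 * Fp.[3^-1] <= Fp.[a] + 2 * Fp.[(1 - a) / 2] by apply: hmono => //; lra.
have : 2 * Fp.[(1 - a) / 2] <= Fp.[b] + Fp.[c].
  by rewrite -e; apply: jensen => //; lra.
lra.
Qed.

Lemma ineq3 a b c : 0 <= a -> 0 <= b -> 0 <= c -> a + b + c = 1 ->
  3 * Fp.[3^-1] <= Fp.[a] + Fp.[b] + Fp.[c].
Proof.
move=> a0 b0 c0 s.
case: (leP b a) => ba; case: (leP c a) => ca.
- exact: ineq3_max.
- have : 3 * Fp.[3^-1] <= Fp.[c] + Fp.[a] + Fp.[b].
    by apply: ineq3_max => //; lra.
  lra.
- case: (leP c b) => cb.
    have : 3 * Fp.[3^-1] <= Fp.[b] + Fp.[a] + Fp.[c] by apply: ineq3_max => //; lra.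
    lra.
  have : 3 * Fp.[3^-1] <= Fp.[c] + Fp.[a] + Fp.[b] by apply: ineq3_max => //; lra.
  lra.
- case: (leP c b) => cb.
    have : 3 * Fp.[3^-1] <= Fp.[b] + Fp.[a] + Fp.[c] by apply: ineq3_max => //; lra.
    lra.
  have : 3 * Fp.[3^-1] <= Fp.[c] + Fp.[a] + Fp.[b] by apply: ineq3_max => //; lra.
  lra.
Qed.
End Ineq3.


Section Integ.
Variables (R : realType) (n : nat).
Hypothesis hn : (1 <= n)%N.
Local Notation Fp := (@Fp R n).
Local Notation cc := (@cc R n).

Lemma binomB0 k : binomB k n (0 : R) = 1.
Proof.
rewrite /binomB big_ord_recl /= !expr0 bin0 mulr1 subr0 expr1n big1 ?addr0 ?mulr1 //.
by move=> i _; rewrite expr0n /= mulr0 mul0r.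
Qed.

Lemma Fp0 : Fp.[0] = 0.
Proof. by rewrite Fp_horner binomB0 subrr. Qed.

Lemma integral_eq :
  Rintegral (@lebesgue_measure R) `[0, 3^-1]%classic
     (fun t : R => t ^+ n./2 * (1 - t) ^+ (n - n./2 - 1)) = Fp.[3^-1] / cc.
Proof.
have c0 := cc_gt0 R hn.
have -> : (fun t : R => t ^+ n./2 * (1 - t) ^+ (n - n./2 - 1)) = horner (T R n./2 (n - n./2 - 1)).
  by apply/funext => t; rewrite /T hornerM hornerXn horner_exp hornerD hornerN hornerX hornerC.
rewrite /Rintegral (@continuous_FTC2 R _ (horner (cc^-1 *: Fp))).
- by rewrite -EFinB /= !hornerZ Fp0 mulr0 subr0 mulrC.
- by rewrite invr_gt0.
- by apply: continuous_subspaceT; exact: continuous_horner.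
- split=> [x _| |].
  + exact: derivable_horner.
  + by apply: cvg_at_right_filter; exact: continuous_horner.
  + by apply: cvg_at_left_filter; exact: continuous_horner.
- move=> x _; rewrite -derivE derivZ Fp_deriv // scalerA mulVf ?scale1r //.
  by rewrite gt_eqF.
Qed.
End Integ.


Lemma fmaj_eq (R : realType) n (t : R) : fmaj n t = 1 - binomB n./2 n t.
Proof.
have tot : \sum_(j < n.+1) 'C(n, j)%:R * t ^+ j * (1 - t) ^+ (n - j) = ((1 - t) + t) ^+ n.
  by rewrite exprDn; apply: eq_bigr => j _; rewrite -mulr_natl; ring.
rewrite subrK expr1n (bigID (fun j : 'I_n.+1 => (n < 2 * j)%N)) /= in tot.
have hB : \sum_(j < n.+1 | ~~ (n < 2 * j)%N) 'C(n, j)%:R * t ^+ j * (1 - t) ^+ (n - j)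
   = binomB n./2 n t.
  rewrite /binomB (big_ord_widen n.+1 (fun j => 'C(n, j)%:R * t ^+ j * (1 - t) ^+ (n - j))); last first.
    by rewrite ltnS; have := odd_double_half n; lia.
  apply: eq_bigl => j; rewrite ltnS geq_half_double -mul2n; lia.
by rewrite -tot hB addrK.
Qed.

Lemma sum_tc (R : realType) (p : 'I_6 -> R) : \sum_(c < 3) tc p c = \sum_r p r.
Proof.
rewrite [RHS](partition_big (fun r : 'I_6 => (inord (val r)./2 : 'I_3)) predT) //=.
apply: eq_bigr => c _; apply: eq_bigl => r /=.
have h : ((val r)./2 < 3)%N by rewrite ltn_half_double; exact: ltn_ord.
by rewrite /topb [RHS]/eq_op /= inordK.
Qed.

Lemma tc_cyc1 (R : realType) c : tc (@p_cyc1 R) c = 3^-1.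
Proof.
rewrite /tc big_mkcond /= !big_ord_recr big_ord0 /= /p_cyc1 /=.
by case3 c; rewrite /topb /=; lra.
Qed.
Lemma tc_cyc2 (R : realType) c : tc (@p_cyc2 R) c = 3^-1.
Proof.
rewrite /tc big_mkcond /= !big_ord_recr big_ord0 /= /p_cyc2 /=.
by case3 c; rewrite /topb /=; lra.
Qed.
Lemma sum_cyc1 (R : realType) : \sum_r (@p_cyc1 R) r = 1.
Proof. by rewrite !big_ord_recr big_ord0 /= /p_cyc1 /=; lra. Qed.
Lemma sum_cyc2 (R : realType) : \sum_r (@p_cyc2 R) r = 1.
Proof. by rewrite !big_ord_recr big_ord0 /= /p_cyc2 /=; lra. Qed.

Lemma aux3 (R : realType) (x a b : R) : a * b != 0 -> 3 * x = 3 * a * b * (x / (a * b)).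
Proof. move=> h; move: (h); rewrite mulf_eq0 negb_or => /andP[ha hb]. by field; rewrite hb ha. Qed.

Lemma sumQ_F (R : realType) n (p : 'I_6 -> R) : (1 <= n)%N -> \sum_r p r = 1 ->
  \sum_(c < 3) Qc n p c = \sum_(c < 3) (Fp R n).[tc p c].
Proof.
move=> hn p1; apply: eq_bigr => c _; by rewrite Q_eq // fmaj_eq Fp_horner.
Qed.

Theorem mainTheorem9 (R : realType) (n : nat) (hn : (1 <= n)%N) :
  let k := n./2 in
  let bound : R := 3 * (1 - binomB k n (3^-1 : R)) in
  (forall p : 'I_6 -> R, is_prob_vector p -> bound <= PCW n p) /\
  bound = 3 * n%:R * ('C(n.-1, k))%:R *
          Rintegral (@lebesgue_measure R) `[0, 3^-1]%classic
            (fun t : R => t ^+ k * (1 - t) ^+ (n - k - 1)) /\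
  PCW n (@p_cyc1 R) = bound /\
  PCW n (@p_cyc2 R) = bound.
Proof.
move=> k bound.
have hb : bound = 3 * (Fp R n).[3^-1] by rewrite /bound Fp_horner.
have h3 : \sum_(c < 3) (Fp R n).[3^-1] = bound.
  by rewrite sumr_const card_ord hb mulr_natl.
split; [|split; [|split]].
- move=> p [p0 p1]; apply: le_trans (PCW_ge n p0).
  rewrite sumQ_F // hb.
  have s := sum_tc p; rewrite p1 !big_ord_recr big_ord0 /= add0r in s.
  rewrite !big_ord_recr big_ord0 /= add0r.
  apply: ineq3 => //; rewrite /tc; apply: sumr_ge0 => r _; exact: p0.
- rewrite hb integral_eq // /cc natrM; apply: aux3.
  have := cc_gt0 R hn; rewrite /cc natrM => h; exact: lt0r_neq0.
- rewrite (@PCW_cyc R n _ S1 d1 cyc1P); last first.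
    by move=> r; rewrite /S1 /p_cyc1 => /negPf ->.
  rewrite sumQ_F ?sum_cyc1 // -h3; apply: eq_bigr => c _; by rewrite tc_cyc1.
- rewrite (@PCW_cyc R n _ S2 d2 cyc2P); last first.
    by move=> r; rewrite /S2 /p_cyc2 => /negPf ->.
  rewrite sumQ_F ?sum_cyc2 // -h3; apply: eq_bigr => c _; by rewrite tc_cyc2.
Qed.
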